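(* For any prime power $q$, there exists a $\left(3;\ (q^2+q+1)(q+1),\ q^2+q+1,\ 3\right)$ perfect hash family.
   Context: Let $r,m,q',t$ be integers with $m\ge q'\ge t\ge2$. An $(r;m,q',t)$ perfect hash family (PHF) is a set $\mathcal{X}$ of $r$ functions from a set $\mathcal{B}$ with $|\mathcal{B}|=m$ to a set $\mathcal{C}$ with $|\mathcal{C}|=q'$ such that for every $\mathcal{T}\subseteq\mathcal{B}$ with $|\mathcal{T}|=t$ there is at least one $\varphi\in\mathcal{X}$ whose restriction to $\mathcal{T}$ is injective. Equivalently, an $r\times m$ array over $q'$ symbols in which every $r\times t$ subarray has at least one row with $t$ distinct symbols. *)

(* Defs.v *)
From mathcomp Require Import all_boot.
Set Implicit Arguments. Unset Strict Implicit. Unset Printing Implicit Defensive.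

Definition prime_power (q : nat) : Prop :=
  exists p k, prime p /\ 0 < k /\ q = p ^ k.

Definition is_PHF (r m q' t : nat) (X : 'I_r -> {ffun 'I_m -> 'I_q'}) : Prop :=
  forall T : {set 'I_m}, #|T| = t ->
    exists i : 'I_r, {in T &, injective (X i)}.

Definition PHF_exists (r m q' t : nat) : Prop :=
  [/\ q' <= m, t <= q', 2 <= t &
      exists X : 'I_r -> {ffun 'I_m -> 'I_q'}, @is_PHF r m q' t X].

(* Main.v *)
Require Import Defs.
From mathcomp Require Import all_boot.
From mathcomp Require Import all_algebra zify.
Import GRing.Theory Num.Theory.
Set Implicit Arguments. Unset Strict Implicit.

Fixpoint G (k n : nat) : nat :=
  if k is k'.+1 then odd n + 3 * G k' n./2 else 0.

Lemma G_ap k m n p : m < 2 ^ k -> n < 2 ^ k ->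
  G k m + G k n = 2 * G k p -> m = n.
Proof.
elim: k m n p => [|k IH] m n p /=.
  by rewrite expn0 !ltnS !leqn0 => /eqP-> /eqP->.
move=> hm hn e.
have hm' : m./2 < 2 ^ k by have := odd_double_half m; move: hm; rewrite expnS -!muln2; set t := 2 ^ k; case: (odd m) => /=; lia.
have hn' : n./2 < 2 ^ k by have := odd_double_half n; move: hn; rewrite expnS -!muln2; set t := 2 ^ k; case: (odd n) => /=; lia.
have [o e2] : odd m = odd n /\ G k m./2 + G k n./2 = 2 * G k p./2.
  by move: e; case: (odd m); case: (odd n); case: (odd p) => /=; lia.
by rewrite -(odd_double_half m) -(odd_double_half n) o (IH _ _ _ hm' hn' e2).
Qed.

Lemma G_bound k n : 2 * G k n <= n ^ 2 + n.
Proof.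
elim: k n => [|k IH] n //=.
move: (odd_double_half n) (IH n./2); rewrite -muln2 -!mulnn.
set h := n./2; set g := G k h.
case: (odd n) => /= e; nia.
Qed.

Lemma modeqZ (N a b : nat) : a %% N = b %% N -> (N%:Z %| (a%:Z - b%:Z)%R)%Z.
Proof. by move=> e; rewrite -eqz_mod_dvd; apply/eqP; rewrite !modz_nat e. Qed.

Lemma mul_bound (N : nat) (k : int) (c : int) : (0 < c)%R ->
  (- (c * N%:Z) < k * N%:Z)%R -> (k * N%:Z < c * N%:Z)%R -> (- c < k < c)%R.
Proof.
move=> c0 h1 h2.
have [e|e] : (k <= - c \/ - c < k)%R by lia.
  have : ((- c - k) * N%:Z >= 0)%R by apply: mulr_ge0; lia.
  lia.
have [e'|e'] : (c <= k \/ k < c)%R by lia.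
  have : ((k - c) * N%:Z >= 0)%R by apply: mulr_ge0; lia.
  lia.
lia.
Qed.

Lemma dvd_small (N : nat) (X : int) : (N%:Z %| X)%Z ->
  (- (N%:Z) < X)%R -> (X < N%:Z)%R -> X = 0%R.
Proof.
case/dvdzP => k -> h1 h2.
have := @mul_bound N k 1 ltr01; rewrite !mul1r => /(_ h1 h2).
by move=> hk; have -> : k = 0%R by lia.
Qed.

Lemma dvd_small2 (N : nat) (X : int) : odd N -> (N%:Z %| (2%:Z * X)%R)%Z ->
  (- (N%:Z) < X)%R -> (X < N%:Z)%R -> X = 0%R.
Proof.
move=> hodd; have := odd_double_half N; rewrite hodd; set r := N./2 => hN.
case/dvdzP => k hk h1 h2.
have := @mul_bound N k 2 isT; rewrite -hk => /(_ ltac:(lia) ltac:(lia)) hb.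
have [e|[e|e]] : (k = -1 \/ k = 0 \/ k = 1)%R by lia.
all: rewrite e in hk; rewrite -hN in hk; lia.
Qed.

Definition NN q := q ^ 2 + q + 1.
Definition Jf q x := x %/ (q + 1).
Definition Df q x := G q (x %% (q + 1)).
Definition F1 q x := (Jf q x + Df q x) %% NN q.
Definition F2 q x := Jf q x.
Definition F3 q x := (Jf q x + (NN q - Df q x)) %% NN q.

Lemma NN_odd q : odd (NN q).
Proof.
have -> : NN q = q * (q + 1) + 1 by rewrite /NN; nia.
by rewrite addn1 /= oddM addn1 /=; case: (odd q).
Qed.

Lemma D_lt q x : 2 * Df q x < NN q.
Proof.
have := G_bound q (x %% (q + 1)); rewrite /Df /NN.
have : x %% (q + 1) < q + 1 by rewrite ltn_mod addn1.
set i := x %% (q + 1); set g := G q i; rewrite -!mulnn; nia.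
Qed.

Lemma D_inj q x y : Df q x = Df q y -> x %% (q + 1) = y %% (q + 1).
Proof.
move=> e; apply: (@G_ap q _ _ (x %% (q + 1))).
- have := ltn_expl q (isT : 1 < 2); have : x %% (q + 1) < q + 1 by rewrite ltn_mod addn1.
  lia.
- have := ltn_expl q (isT : 1 < 2); have : y %% (q + 1) < q + 1 by rewrite ltn_mod addn1.
  lia.
- rewrite /Df in e; rewrite -e; lia.
Qed.

Lemma pt_eq q x y : Jf q x = Jf q y -> Df q x = Df q y -> x = y.
Proof.
by move=> e /D_inj e'; rewrite (divn_eq x (q + 1)) (divn_eq y (q + 1)) -/(Jf q x) e e'.
Qed.

Lemma J_lt q x : x < NN q * (q + 1) -> Jf q x < NN q.
Proof. by move=> h; rewrite /Jf ltn_divLR // addn1. Qed.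

Lemma small_eq (N a b : nat) (E : int) : (N%:Z %| E)%Z -> (a%:Z - b%:Z = E)%R ->
  a < N -> b < N -> a = b.
Proof.
move=> hd e ha hb; have := @dvd_small N E hd; rewrite -e.
have h1 : (- (N%:Z) < a%:Z - b%:Z)%R by lia.
have h2 : (a%:Z - b%:Z < N%:Z)%R by lia.
move=> /(_ h1 h2); lia.
Qed.

Lemma pair12 q x y : x != y -> F1 q x = F1 q y -> F2 q x = F2 q y -> False.
Proof.
move=> /negP ne h1 h2; apply: ne; apply/eqP; refine (pt_eq h2 _).
have hd := modeqZ h1; rewrite /F2 in h2.
have := D_lt q x; have := D_lt q y; move=> dy dx.
apply: (small_eq hd); [rewrite h2; lia | lia | lia].
Qed.

Lemma pair23 q x y : x != y -> F2 q x = F2 q y -> F3 q x = F3 q y -> False.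
Proof.
move=> /negP ne h2 h1; apply: ne; apply/eqP; refine (pt_eq h2 _).
have hd := modeqZ h1; rewrite /F2 in h2.
have := D_lt q x; have := D_lt q y.
move=> hy hx; symmetry.
apply: (small_eq hd); [rewrite h2; lia | lia | lia].
Qed.

Lemma pair13 q x y : x < NN q * (q + 1) -> y < NN q * (q + 1) ->
  x != y -> F1 q x = F1 q y -> F3 q x = F3 q y -> False.
Proof.
move=> hx hy /negP ne h1 h3; apply: ne; apply/eqP.
have hd1 := modeqZ h1; have hd3 := modeqZ h3.
have := D_lt q x; have := D_lt q y; move=> dy dx.
have jx := J_lt hx; have jy := J_lt hy.
have hJ : Jf q x = Jf q y.
  have hd : ((NN q)%:Z %| (2%:Z * ((Jf q x)%:Z - (Jf q y)%:Z))%R)%Z.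
    have -> : (2%:Z * ((Jf q x)%:Z - (Jf q y)%:Z) =
      ((Jf q x + Df q x)%:Z - (Jf q y + Df q y)%:Z) +
      ((Jf q x + (NN q - Df q x))%:Z - (Jf q y + (NN q - Df q y))%:Z))%R by lia.
    exact: rpredD.
  have := dvd_small2 (NN_odd q) hd; lia.
refine (pt_eq hJ _).
apply: (small_eq hd1); [rewrite hJ; lia | lia | lia].
Qed.

Lemma tri q x y z : x != y -> F2 q x = F2 q y -> F1 q y = F1 q z -> F3 q z = F3 q x -> False.
Proof.
move=> /negP ne h2 h1 h3; apply: ne; apply/eqP.
have hd1 := modeqZ h1; have hd3 := modeqZ h3.
have := D_lt q x; have := D_lt q y; have := D_lt q z; move=> dz dy dx.
rewrite /F2 in h2; refine (pt_eq h2 _).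
have e : Df q x + Df q y = 2 * Df q z.
  apply: (small_eq (rpredD hd1 hd3)); [rewrite h2; lia | lia | lia].
move: e; rewrite /Df => e.
have := @G_ap q _ _ _ _ _ e.
have := ltn_expl q (isT : 1 < 2).
have : x %% (q + 1) < q + 1 by rewrite ltn_mod addn1.
have : y %% (q + 1) < q + 1 by rewrite ltn_mod addn1.
move=> a b c /(_ ltac:(lia) ltac:(lia)) ->; done.
Qed.

Lemma inj3 (T : finType) (f : T -> nat) x y z :
  f x != f y -> f y != f z -> f x != f z -> {in x |: [set y; z] &, injective f}.
Proof.
move=> n1 n2 n3 a b; rewrite !inE => ha hb.
case/or3P: ha => /eqP->; case/or3P: hb => /eqP-> e //; move: n1 n2 n3; rewrite ?e ?eqxx //.
Qed.

Lemma inj_or (T : finType) (f : T -> nat) x y z :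
  {in x |: [set y; z] &, injective f} \/ (f x = f y \/ f y = f z \/ f x = f z).
Proof.
case: (eqVneq (f x) (f y)) => [e|n1]; first by right; left.
case: (eqVneq (f y) (f z)) => [e|n2]; first by right; right; left.
case: (eqVneq (f x) (f z)) => [e|n3]; first by right; right; right.
by left; apply: inj3.
Qed.

Ltac close3 x y z P12 P23 P13 Tr := first [
  solve [apply: (P12 x y); [done | congruence | congruence]]
| solve [apply: (P23 x y); [done | congruence | congruence]]
| solve [apply: (P13 x y); [done | congruence | congruence]]
| solve [apply: (P12 x z); [done | congruence | congruence]]
| solve [apply: (P23 x z); [done | congruence | congruence]]
| solve [apply: (P13 x z); [done | congruence | congruence]]
| solve [apply: (P12 y x); [done | congruence | congruence]]
| solve [apply: (P23 y x); [done | congruence | congruence]]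
| solve [apply: (P13 y x); [done | congruence | congruence]]
| solve [apply: (P12 y z); [done | congruence | congruence]]
| solve [apply: (P23 y z); [done | congruence | congruence]]
| solve [apply: (P13 y z); [done | congruence | congruence]]
| solve [apply: (P12 z x); [done | congruence | congruence]]
| solve [apply: (P23 z x); [done | congruence | congruence]]
| solve [apply: (P13 z x); [done | congruence | congruence]]
| solve [apply: (P12 z y); [done | congruence | congruence]]
| solve [apply: (P23 z y); [done | congruence | congruence]]
| solve [apply: (P13 z y); [done | congruence | congruence]]
| solve [apply: (Tr x y z); [done | congruence | congruence | congruence]]
| solve [apply: (Tr x z y); [done | congruence | congruence | congruence]]
| solve [apply: (Tr y x z); [done | congruence | congruence | congruence]]
| solve [apply: (Tr y z x); [done | congruence | congruence | congruence]]
| solve [apply: (Tr z x y); [done | congruence | congruence | congruence]]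
| solve [apply: (Tr z y x); [done | congruence | congruence | congruence]] ].

Lemma comb (T : finType) (S : {set T}) (f1 f2 f3 : T -> nat) :
  #|S| = 3 ->
  (forall x y, x != y -> f1 x = f1 y -> f2 x = f2 y -> False) ->
  (forall x y, x != y -> f2 x = f2 y -> f3 x = f3 y -> False) ->
  (forall x y, x != y -> f1 x = f1 y -> f3 x = f3 y -> False) ->
  (forall x y z, x != y -> f2 x = f2 y -> f1 y = f1 z -> f3 z = f3 x -> False) ->
  {in S &, injective f1} \/ {in S &, injective f2} \/ {in S &, injective f3}.
Proof.
move=> hS P12 P23 P13 Tr.
have [x xS] : exists x, x \in S by apply/card_gt0P; rewrite hS.
have : #|S :\ x| == 2 by move: hS; rewrite (cardsD1 x) xS add1n => -[->].
case/cards2P => y [z [yz eS]].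
have : y \in S :\ x by rewrite eS !inE eqxx.
have : z \in S :\ x by rewrite eS !inE eqxx orbT.
rewrite !inE => /andP[zx _] /andP[yx _].
have xy : x != y by rewrite eq_sym.
have xz : x != z by rewrite eq_sym.
have zy : z != y by rewrite eq_sym.
have eS' : S = x |: [set y; z] by rewrite -eS setD1K.
rewrite eS'.
case: (inj_or f1 x y z) => [i|c1]; first by left.
case: (inj_or f2 x y z) => [i|c2]; first by right; left.
case: (inj_or f3 x y z) => [i|c3]; first by right; right.
exfalso.
case: c1 => [e1|[e1|e1]]; case: c2 => [e2|[e2|e2]]; case: c3 => [e3|[e3|e3]];
  close3 x y z P12 P23 P13 Tr.
Qed.

Theorem lemma7 (q : nat) (hq : prime_power q) :
  PHF_exists 3 ((q ^ 2 + q + 1) * (q + 1)) (q ^ 2 + q + 1) 3.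
Proof.
have q0 : 0 < q.
  by case: hq => p [k [pp [_ ->]]]; rewrite expn_gt0 prime_gt0.
have npos : 0 < q ^ 2 + q + 1 by rewrite addn1.
set m := (q ^ 2 + q + 1) * (q + 1).
have h1 : forall x : 'I_m, F1 q x < q ^ 2 + q + 1 by move=> x; exact: ltn_pmod.
have h3 : forall x : 'I_m, F3 q x < q ^ 2 + q + 1 by move=> x; exact: ltn_pmod.
have h2 : forall x : 'I_m, F2 q x < q ^ 2 + q + 1 by move=> x; exact: (J_lt (ltn_ord x)).
split.
- by rewrite leq_pmulr // addn1.
- have : 0 < q ^ 2 by rewrite expn_gt0 q0.
  lia.
- by [].
pose X := fun i : 'I_3 => if val i == 0 then [ffun x => Ordinal (h1 x)]
  else if val i == 1 then [ffun x => Ordinal (h2 x)] else [ffun x => Ordinal (h3 x)].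
exists X => T hT.
have vne : forall x y : 'I_m, x != y -> val x != val y by [].
have P12 : forall x y : 'I_m, x != y -> F1 q x = F1 q y -> F2 q x = F2 q y -> False.
  by move=> x y /vne; apply: pair12.
have P23 : forall x y : 'I_m, x != y -> F2 q x = F2 q y -> F3 q x = F3 q y -> False.
  by move=> x y /vne; apply: pair23.
have P13 : forall x y : 'I_m, x != y -> F1 q x = F1 q y -> F3 q x = F3 q y -> False.
  by move=> x y /vne; apply: pair13; apply: ltn_ord.
have Tr : forall x y z : 'I_m, x != y -> F2 q x = F2 q y -> F1 q y = F1 q z -> F3 q z = F3 q x -> False.
  by move=> x y z /vne; apply: tri.
have := @comb _ T (fun x => F1 q x) (fun x => F2 q x) (fun x => F3 q x) hT P12 P23 P13 Tr.
case=> [i|[i|i]].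
- exists (@Ordinal 3 0 isT) => a b ha hb; rewrite /X /= !ffunE => /(congr1 val) /=; exact: i.
- exists (@Ordinal 3 1 isT) => a b ha hb; rewrite /X /= !ffunE => /(congr1 val) /=; exact: i.
- exists (@Ordinal 3 2 isT) => a b ha hb; rewrite /X /= !ffunE => /(congr1 val) /=; exact: i.
Qed.
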